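(* In the setting below, the asymmetric product $T\rtimes_\circ S$ is a simple left brace if and only if $f_z-\mathrm{id}$ is bijective on $V_z$ for every $z\in\mathbb{Z}/(n)$.
   Context: A left brace is a set $B$ with two operations $+,\cdot$ such that $(B,+)$ is an abelian group, $(B,\cdot)$ is a group and $a(b+c)+a=ab+ac$ for all $a,b,c$; $\lambda_a(b)=ab-a$. A left ideal is a subgroup $L$ of $(B,+)$ with $\lambda_b(L)\subseteq L$ for all $b$; an ideal is a left ideal that is a normal subgroup of $(B,\cdot)$; $B$ is simple if $B\neq0$ and its only ideals are $0$ and $B$. For a symmetric bi-additive map $\beta\colon X\times X\to Y$, $\mathrm{O}(X,\beta)=\{g\in\mathrm{Aut}(X,+):\beta(g(x),g(y))=\beta(x,y)\ \forall x,y\}$. Setting: $n>1$, indices $z$ range over $\mathbb{Z}/(n)$. For each $z$, $p_z$ is a prime ($p_z\ne p_{z'}$ for $z\ne z'$), $r_z$ is a positive integer, $m_z$ is an integer with $m_z\ge\max\{r_z,r_{z-1}\}$, $V_z$ is a finite-dimensional $\mathbb{Z}/(p_z)$-vector space with a non-singular symmetric bilinear form $b_z$, and $f_z\in\mathrm{O}(V_z,b_z)$ has order $p_{z-1}$. Let $T_z=V_z^{m_z}$, $S_z=(\mathbb{Z}/(p_z))^{r_z}$ with standard basis $e^{(z)}_1,\dots,e^{(z)}_{r_z}$. Define $b'_z\colon T_z\times T_z\to S_z$ by $b'_z((u_j),(v_j))=\sum_{i=1}^{r_z-1}b_z(u_i,v_i)e^{(z)}_i+\big(\sum_{j=1}^{m_z}b_z(u_j,v_j)\big)e^{(z)}_{r_z}$.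 With $r=r_{z-1}$ and $s=\sum_{i=1}^r\mu_ie^{(z-1)}_i\in S_{z-1}$, define $f^{(z-1,z)}_s(u_1,\dots,u_{m_z})=(f_z^{\mu_1+\mu_r}(u_1),\dots,f_z^{\mu_{r-1}+\mu_r}(u_{r-1}),f_z^{\mu_r}(u_r),\dots,f_z^{\mu_r}(u_{m_z}))$ (all components $f_z^{\mu_1}(u_j)$ if $r=1$). Let $T=T_1\times\cdots\times T_n$, $S=S_1\times\cdots\times S_n$, $b\colon T\times T\to S$, $b(t,t')=(b'_1(t_1,t'_1),\dots,b'_n(t_n,t'_n))$, and $\alpha_{(s_1,\dots,s_n)}(t_1,\dots,t_n)=(f^{(n,1)}_{s_n}(t_1),f^{(1,2)}_{s_1}(t_2),\dots,f^{(n-1,n)}_{s_{n-1}}(t_n))$. The asymmetric product $T\rtimes_\circ S$ is the set $T\times S$ with $(t,s)+(t',s')=(t+t',s+s'+b(t,t'))$ and $(t,s)\cdot(t',s')=(t+\alpha_s(t'),s+s')$; it is a left brace. *)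

(* Defs.v *)
From HB Require Import structures.
From mathcomp Require Import all_boot all_order all_algebra all_fingroup.
Set Implicit Arguments. Unset Strict Implicit. Unset Printing Implicit Defensive.
Import GRing.Theory.
Local Open Scope ring_scope.

Section BraceNotions.
Variables (B : Type) (add : B -> B -> B) (zero : B) (mul : B -> B -> B) (one : B).

(* lambda_a(b) = ab - a, i.e. the unique c with a + c = ab *)
Definition brace_lambda_rel (a x c : B) : Prop := add a c = mul a x.

Definition add_subgroup (L : B -> Prop) : Prop :=
  [/\ L zero,
      (forall x y, L x -> L y -> L (add x y)) &
      (forall x y, L x -> add x y = zero -> L y)].

Definition left_ideal (L : B -> Prop) : Prop :=
  add_subgroup L /\ (forall b x c, L x -> brace_lambda_rel b x c -> L c).

Definition normal_mul_subgroup (L : B -> Prop) : Prop :=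
  [/\ L one,
      (forall x y, L x -> L y -> L (mul x y)),
      (forall x y, L x -> mul x y = one -> L y) &
      (forall b c x, mul b c = one -> L x -> L (mul (mul b x) c))].

Definition brace_ideal (L : B -> Prop) : Prop := left_ideal L /\ normal_mul_subgroup L.

Definition simple_brace : Prop :=
  (exists x, x <> zero) /\
  forall L, brace_ideal L -> (forall x, L x <-> x = zero) \/ (forall x, L x).
End BraceNotions.

Definition map_order (T : Type) (g : T -> T) (k : nat) : Prop :=
  (0 < k)%N /\ (forall x, iter k g x = x) /\
  (forall j, (0 < j < k)%N -> exists x, iter j g x <> x).

(* 0-based coordinate i of a row vector (0 if out of range) *)
Definition rcoef (R : nzRingType) k (s : 'rV[R]_k) (i : nat) : R :=
  oapp (fun j : 'I_k => s 0 j) 0 (insub i).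

(* 0-based row i of a matrix (0 if out of range) *)
Definition mrow (R : nzRingType) m d (t : 'M[R]_(m, d)) (i : nat) : 'rV[R]_d :=
  oapp (fun j : 'I_m => row j t) 0 (insub i).

Section Asym.
Variables (n : nat) (p r m d : 'I_n -> nat).
Local Notation F z := ('F_(p z)).
Local Notation V z := ('rV[F z]_(d z)).
(* T_z = V_z^{m_z}: the j-th row of a matrix is u_{j+1} *)
Local Notation Tz z := ('M[F z]_(m z, d z)).
(* S_z = (Z/p_z)^{r_z}: coordinate i is the coefficient of e_{i+1} *)
Local Notation Sz z := ('rV[F z]_(r z)).
Variables (b : forall z, V z -> V z -> F z) (f : forall z, V z -> V z).

Definition bprime (z : 'I_n) (u v : Tz z) : Sz z :=
  \row_(i < r z)
    (if (i < (r z).-1)%N then b (mrow u i) (mrow v i)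
     else \sum_(j < m z) b (row j u) (row j v)).

Definition fshift (z : 'I_n) (s : Sz (ord_pred z)) (t : Tz z) : Tz z :=
  let rl := (r (ord_pred z)).-1 in
  \matrix_(j < m z)
    iter (nat_of_ord (if (j < rl)%N then rcoef s j + rcoef s rl else rcoef s rl))
         (f (z:=z)) (row j t).

Definition AsymT := ((forall z, Tz z) * (forall z, Sz z))%type.

Definition asym_add (x y : AsymT) : AsymT :=
  (fun z => x.1 z + y.1 z, fun z => x.2 z + y.2 z + bprime (x.1 z) (y.1 z)).

Definition asym_mul (x y : AsymT) : AsymT :=
  (fun z => x.1 z + fshift (x.2 (ord_pred z)) (y.1 z), fun z => x.2 z + y.2 z).

Definition asym_zero : AsymT := (fun z => 0, fun z => 0).
End Asym.

(* Main.v *)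
Require Import Defs.
From mathcomp Require Import all_boot all_order all_algebra all_fingroup.
From Stdlib Require Import FunctionalExtensionality Classical.
From mathcomp Require Import ring zify.
Unset Printing Implicit Defensive.
Import GRing.Theory.
Local Open Scope ring_scope.

Section Proof3.
Variables (n : nat) (p r m d : 'I_n -> nat).
Hypothesis hp : forall z, prime (p z).
Hypothesis hr : forall z, (0 < r z)%N.
Hypothesis hm : forall z, (maxn (r z) (r (ord_pred z)) <= m z)%N.
Variable b : forall z, 'rV['F_(p z)]_(d z) -> 'rV['F_(p z)]_(d z) -> 'F_(p z).
Hypothesis hb_lin : forall z a u v w, b z (a *: u + v) w = a * b z u w + b z v w.
Hypothesis hb_sym : forall z u v, b z u v = b z v u.
Hypothesis hb_ns : forall z u, (forall v, b z u v = 0) -> u = 0.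
Variable f : forall z, 'rV['F_(p z)]_(d z) -> 'rV['F_(p z)]_(d z).
Hypothesis hf_add : forall z u v, f z (u + v) = f z u + f z v.
Hypothesis hf_ord : forall z, map_order (f z) (p (ord_pred z)).

Local Notation Tz z := 'M['F_(p z)]_(m z, d z).
Local Notation Sz z := 'rV['F_(p z)]_(r z).
Local Notation B := (AsymT p r m d).
Local Notation add := (@asym_add n p r m d b).
Local Notation mul := (@asym_mul n p r m d f).
Local Notation zero := (asym_zero p r m d).

Lemma bD1 z u v w : b z (u + v) w = b z u w + b z v w.
Proof. by have := hb_lin z 1 u v w; rewrite scale1r mul1r. Qed.
Lemma b01 z w : b z 0 w = 0.
Proof. by apply: (addrI (b z 0 w)); rewrite addr0 -bD1 addr0. Qed.
Lemma bN1 z u w : b z (- u) w = - b z u w.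
Proof. by apply/eqP; rewrite -subr_eq0 opprK -bD1 addNr b01. Qed.
Lemma bZ1 z a u w : b z (a *: u) w = a * b z u w.
Proof. by have := hb_lin z a u 0 w; rewrite addr0 b01 addr0. Qed.
Lemma bD2 z u v w : b z w (u + v) = b z w u + b z w v.
Proof. by rewrite !(hb_sym z w) bD1. Qed.
Lemma b02 z w : b z w 0 = 0.
Proof. by rewrite hb_sym b01. Qed.
Lemma bN2 z u w : b z w (- u) = - b z w u.
Proof. by rewrite !(hb_sym z w) bN1. Qed.

Lemma f0 z : f z 0 = 0.
Proof. by apply: (addrI (f z 0)); rewrite addr0 -hf_add addr0. Qed.
Lemma fN z u : f z (- u) = - f z u.
Proof. by apply/eqP; rewrite -subr_eq0 opprK -hf_add addNr f0. Qed.
Lemma iterfD z k u v : iter k (f z) (u + v) = iter k (f z) u + iter k (f z) v.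
Proof. by elim: k => //= k ->; rewrite hf_add. Qed.
Lemma iterf0 z k : iter k (f z) 0 = 0.
Proof. by elim: k => //= k ->; rewrite f0. Qed.
Lemma iterfN z k u : iter k (f z) (- u) = - iter k (f z) u.
Proof. by elim: k => //= k ->; rewrite fN. Qed.

Lemma iter_ordP z q u : iter (q * p (ord_pred z)) (f z) u = u.
Proof.
elim: q => [|q IH] //=; rewrite mulSn iterD IH.
by case: (hf_ord z) => _ [-> _].
Qed.
Lemma iter_mod z k u : iter (k %% p (ord_pred z)) (f z) u = iter k (f z) u.
Proof. by rewrite {2}(divn_eq k (p (ord_pred z))) addnC iterD iter_ordP. Qed.

Lemma iterF_add z (a c : 'F_(p (ord_pred z))) u :
  iter (a + c)%R (f z) u = iter a (f z) (iter c (f z) u).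
Proof.
have -> : nat_of_ord (a + c)%R = ((a + c) %% p (ord_pred z))%N.
  by rewrite /=; congr (_ %% _)%N; exact: Fp_cast.
by rewrite iter_mod iterD.
Qed.

Lemma rcoefD k (F : nzRingType) (s s' : 'rV[F]_k) i : rcoef (s + s') i = rcoef s i + rcoef s' i.
Proof. by rewrite /rcoef; case: insubP => [j _ _|_] /=; rewrite ?mxE ?addr0. Qed.
Lemma rcoef0 k (F : nzRingType) i : rcoef (0 : 'rV[F]_k) i = 0.
Proof. by rewrite /rcoef; case: insubP => [j _ _|_] /=; rewrite ?mxE. Qed.
Lemma rcoef_ord k (F : nzRingType) (s : 'rV[F]_k) (j : 'I_k) : rcoef s j = s 0 j.
Proof. by rewrite /rcoef valK. Qed.

Lemma mrowD (F : nzRingType) k c (s s' : 'M[F]_(k, c)) i : mrow (s + s') i = mrow s i + mrow s' i.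
Proof. by rewrite /mrow; case: insubP => [j _ _|_] /=; rewrite ?linearD ?addr0. Qed.
Lemma mrow0 (F : nzRingType) k c i : mrow (0 : 'M[F]_(k, c)) i = 0.
Proof. by rewrite /mrow; case: insubP => [j _ _|_] /=; rewrite ?linear0. Qed.
Lemma mrow_ord (F : nzRingType) k c (s : 'M[F]_(k, c)) (j : 'I_k) : mrow s j = row j s.
Proof. by rewrite /mrow valK. Qed.

Local Notation fsh z s t := (@fshift n p r m d f z s t).
Local Notation bp z u v := (@bprime n p r m d b z u v).

Definition expo z (s : Sz z) (k : nat) : 'F_(p z) :=
  if (k < (r z).-1)%N then rcoef s k + rcoef s (r z).-1 else rcoef s (r z).-1.
Arguments expo [z] s k.

Lemma row_fsh z (s : Sz (ord_pred z)) (t : Tz z) (j : 'I_(m z)) :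
  row j (fsh z s t) = iter (expo s j) (f z) (row j t).
Proof. by rewrite /fshift rowK. Qed.

Lemma fshD z s (t t' : Tz z) : fsh z s (t + t') = fsh z s t + fsh z s t'.
Proof. by apply/row_matrixP => j; rewrite linearD /= !row_fsh linearD /= iterfD. Qed.
Lemma fsh0 z s : fsh z s 0 = 0.
Proof. by apply/row_matrixP => j; rewrite row_fsh !linear0 iterf0. Qed.
Lemma fshN z s (t : Tz z) : fsh z s (- t) = - fsh z s t.
Proof. by apply/row_matrixP => j; rewrite linearN /= !row_fsh linearN /= iterfN. Qed.
Lemma fsh_s0 z (t : Tz z) : fsh z 0 t = t.
Proof.
apply/row_matrixP => j; rewrite row_fsh /expo !rcoef0 addr0.
by case: ifP.
Qed.

Lemma bpD1 z (u u' v : Tz z) : bp z (u + u') v = bp z u v + bp z u' v.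
Proof.
apply/rowP => i; rewrite !mxE; case: ifP => _; first by rewrite mrowD bD1.
by rewrite -big_split /=; apply: eq_bigr => j _; rewrite linearD /= bD1.
Qed.
Lemma bpsym z (u v : Tz z) : bp z u v = bp z v u.
Proof.
apply/rowP => i; rewrite !mxE; case: ifP => _; first by rewrite hb_sym.
by apply: eq_bigr => j _; rewrite hb_sym.
Qed.
Lemma bp01 z (v : Tz z) : bp z 0 v = 0.
Proof. by apply: (addrI (bp z 0 v)); rewrite addr0 -bpD1 addr0. Qed.
Lemma bpN1 z (u v : Tz z) : bp z (- u) v = - bp z u v.
Proof. by apply/eqP; rewrite -subr_eq0 opprK -bpD1 addNr bp01. Qed.
Lemma bpD2 z (u u' v : Tz z) : bp z v (u + u') = bp z v u + bp z v u'.
Proof. by rewrite !(bpsym z v) bpD1. Qed.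
Lemma bp02 z (v : Tz z) : bp z v 0 = 0.
Proof. by rewrite bpsym bp01. Qed.
Lemma bpN2 z (u v : Tz z) : bp z v (- u) = - bp z v u.
Proof. by rewrite !(bpsym z v) bpN1. Qed.

Lemma eqB (x y : B) : (forall z, x.1 z = y.1 z) -> (forall z, x.2 z = y.2 z) -> x = y.
Proof.
case: x => x1 x2; case: y => y1 y2 /= h1 h2.
by congr pair; apply: functional_extensionality_dep.
Qed.

Definition tzero : forall z, Tz z := fun z => 0.
Definition szero : forall z, Sz z := fun z => 0.

Definition dT z0 (M : Tz z0) : forall z, Tz z := fun z =>
  match z0 =P z with ReflectT e => eq_rect z0 (fun z => Tz z) M z e | ReflectF _ => 0 end.
Definition dS z0 (M : Sz z0) : forall z, Sz z := fun z =>
  match z0 =P z with ReflectT e => eq_rect z0 (fun z => Sz z) M z e | ReflectF _ => 0 end.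
Arguments dT [z0] M z.
Arguments dS [z0] M z.

Lemma dT_eq z0 (M : Tz z0) : dT M z0 = M.
Proof. rewrite /dT; case: eqP => // e; by rewrite (eq_axiomK e). Qed.
Lemma dT_neq z0 (M : Tz z0) z : z0 != z -> dT M z = 0.
Proof. by rewrite /dT; case: eqP. Qed.
Lemma dS_eq z0 (M : Sz z0) : dS M z0 = M.
Proof. rewrite /dS; case: eqP => // e; by rewrite (eq_axiomK e). Qed.
Lemma dS_neq z0 (M : Sz z0) z : z0 != z -> dS M z = 0.
Proof. by rewrite /dS; case: eqP. Qed.


Lemma p_gt1 z : (1 < p z)%N.
Proof. exact: prime_gt1. Qed.

Lemma Vnz z : exists v : 'rV['F_(p z)]_(d z), v != 0.
Proof.
case: (hf_ord z) => _ [_ hj].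
have [x hx] : exists x, iter 1 (f z) x <> x by apply: hj; rewrite /= p_gt1.
exists x; apply/eqP => x0; apply: hx; by rewrite x0 /= f0.
Qed.

Lemma bdual z (u : 'rV['F_(p z)]_(d z)) : u != 0 -> exists w, b z w u = 1.
Proof.
move=> hu.
case: (boolP [exists v, b z u v != 0]) => [/existsP [v hv]|/existsPn hn].
  exists ((b z u v)^-1 *: v); by rewrite bZ1 (hb_sym z v u) mulVf.
move/eqP: hu; case; apply: hb_ns => v; by apply/eqP; move: (hn v); rewrite negbK.
Qed.

Arguments bdual [z u].
Definition rowmat z (k0 : 'I_(m z)) (v : 'rV['F_(p z)]_(d z)) : Tz z :=
  \matrix_(k < m z) (if k == k0 then v else 0).
Arguments rowmat [z] k0 v.

Lemma row_rowmat z (k0 : 'I_(m z)) (v : 'rV['F_(p z)]_(d z)) k : row k (rowmat k0 v) = if k == k0 then v else 0.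
Proof. by rewrite rowK. Qed.

Arguments row_rowmat [z] k0 v k.
Lemma mrow_mx z (F : 'I_(m z) -> 'rV['F_(p z)]_(d z)) i (hi : (i < m z)%N) :
  mrow (\matrix_k F k) i = F (Ordinal hi).
Proof.
rewrite /mrow; case: insubP => [k _ hk|]; last by rewrite hi.
by rewrite /= rowK; congr F; apply: val_inj.
Qed.

Arguments mrow_mx [z F i].
Lemma mrow_rowmat z (k0 : 'I_(m z)) (v : 'rV['F_(p z)]_(d z)) (i : nat) : i != k0 :> nat -> mrow (rowmat k0 v) i = 0.
Proof.
move=> hi; rewrite /mrow; case: insubP => [k _ hk|] //=.
by rewrite rowK; case: eqP => // e; move: hi; rewrite -hk e eqxx.
Qed.

Lemma rcoef_bp_lt z (u v : Tz z) i : (i < (r z).-1)%N ->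
  rcoef (bp z u v) i = b z (mrow u i) (mrow v i).
Proof.
move=> hi; rewrite /rcoef; case: insubP => [k _ hk|] /=.
  by rewrite mxE hk hi.
by move: (hr z) hi => ?; rewrite -ltnNge; lia.
Qed.

Lemma rcoef_bp_last z (u v : Tz z) :
  rcoef (bp z u v) (r z).-1 = \sum_(j < m z) b z (row j u) (row j v).
Proof.
rewrite /rcoef; case: insubP => [k _ hk|] /=.
  by rewrite mxE hk ltnn.
by move: (hr z) => ?; rewrite -ltnNge; lia.
Qed.

Lemma sum_rowmat z (k0 : 'I_(m z)) (w v : 'rV['F_(p z)]_(d z)) (Y : Tz z) : row k0 Y = v ->
  \sum_(j < m z) b z (row j (rowmat k0 w)) (row j Y) = b z w v.
Proof.
move=> hY; rewrite (bigD1 k0) //= big1 => [|k hk]; first by rewrite row_rowmat eqxx hY addr0.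
by rewrite row_rowmat (negbTE hk) b01.
Qed.

Lemma val1 q : nat_of_ord (1 : 'F_q) = 1%N.
Proof. by rewrite /= modn_small. Qed.

Lemma iter_ordS (z0 : 'I_n) k : nat_of_ord (iter k (@ordS n) z0) = ((z0 + k) %% n)%N.
Proof.
elim: k => [|k IH] /=; first by rewrite addn0 modn_small.
by rewrite IH -addn1 modnDml addn1 addnS.
Qed.

Section Ideal.
Variable L : B -> Prop.
Hypothesis HL : brace_ideal add zero mul zero L.

Lemma Lext x y : L x -> (forall z, x.1 z = y.1 z) -> (forall z, x.2 z = y.2 z) -> L y.
Proof. by move=> Lx h1 h2; rewrite -(eqB x y h1 h2). Qed.

Arguments Lext [x y].
Lemma L0 : L zero.
Proof. by case: HL => [[[]]]. Qed.
Lemma Ladd x y : L x -> L y -> L (add x y).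
Proof. by case: HL => [[[_ H _] _] _]; apply: H. Qed.

Arguments Ladd [x y].
Lemma Lneg (t : forall z, Tz z) s : L (t, s) ->
  L ((fun z => - t z), (fun z => - s z + bp z (t z) (t z))).
Proof.
case: HL => [[[_ _ Hinv] _] _] Hts; apply: (Hinv (t, s)) => //.
apply: eqB => z /=; first by rewrite addrN.
by rewrite bpN2 addrA addrN add0r addrN.
Qed.

Arguments Lneg [t s].
Lemma F1 (t : forall z, Tz z) s : L (t, s) ->
  forall x : forall z, Tz z, L (tzero, fun z => bp z (x z) (t z)).
Proof.
move=> Hts x.
have Hc : L (t, fun z => s z + bp z (x z) (t z)).
  case: HL => [[_ Hlam] _]; apply: (Hlam (fun z => - x z, szero) (t, s)) => //.
  rewrite /brace_lambda_rel; apply: eqB => z /=; rewrite /szero ?fsh_s0 //.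
  by rewrite bpN1 !add0r -addrA addrN addr0.
apply: Lext (Ladd Hc (Lneg Hts)) _ _ => z /=; first by rewrite addrN.
rewrite bpN2; apply/rowP => i; rewrite !mxE; ring.
Qed.

Arguments F1 [t s].

Lemma F3 (t : forall z, Tz z) s : L (t, s) ->
  forall x : forall z, Tz z,
  L ((fun z => x z - fsh z (s (ord_pred z)) (x z)), szero).
Proof.
move=> Hts x.
have Hc : L (mul (mul (x, szero) (t, s)) (fun z => - x z, szero)).
  case: HL => [_ [_ _ _ Hconj]]; apply: Hconj Hts.
  apply: eqB => z /=; rewrite /szero ?addr0 //.
  by rewrite fsh_s0 addrN.
have H2 := Ladd (Ladd Hc (Lneg Hts)) (F1 Hts (fun z => x z - fsh z (s (ord_pred z)) (x z))).
apply: Lext H2 _ _ => z /=; rewrite /szero /tzero.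
  rewrite fsh_s0 add0r fshN addr0; apply/matrixP => i j; rewrite !mxE; ring.
rewrite bp02 fsh_s0 !add0r fshN addr0 bpN2 !bpD1 !bpN1.
apply/rowP => i; rewrite !mxE; ring.
Qed.
Arguments F3 [t s].


Lemma Lbp z (X : Tz z) (t : forall z, Tz z) s : L (t, s) -> L (tzero, dS (bp z X (t z))).
Proof.
move=> H; apply: Lext (F1 H (dT X)) _ _ => z' //=.
case: (eqVneq z z') => [<-|ne]; first by rewrite dT_eq dS_eq.
by rewrite dT_neq // dS_neq // bp01.
Qed.

Arguments Lbp [z] X [t s].
Lemma stepA (t : forall z, Tz z) s z (j : 'I_(m z)) : L (t, s) -> row j (t z) != 0 ->
  exists sg : Sz z, [/\ L (tzero, dS sg), rcoef sg (r z).-1 = 1 &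
     forall i, (i < (r z).-1)%N -> rcoef sg i = (i == j)%:R].
Proof.
move=> H hj; have [w hw] := bdual hj.
exists (bp z (rowmat j w) (t z)); split; first exact: Lbp H.
  by rewrite rcoef_bp_last (@sum_rowmat z j w _ (t z) erefl) hw.
move=> i hi; rewrite rcoef_bp_lt //.
case: (eqVneq i (j : nat)) => [->|ne].
  by rewrite !mrow_ord row_rowmat !eqxx hw.
by rewrite mrow_rowmat // b01.
Qed.

Lemma stepZ (t : forall z, Tz z) s w : L (t, s) -> s (ord_pred w) != 0 ->
  exists (t' : forall z, Tz z) (j : 'I_(m w)), L (t', szero) /\ row j (t' w) != 0.
Proof.
move=> H hs.
have [i hi] : exists i : 'I_(r (ord_pred w)), s (ord_pred w) 0 i != 0.
  case: (boolP [exists i, s (ord_pred w) 0 i != 0]) => [/existsP //|/existsPn hn].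
  move/eqP: hs; case; apply/rowP => k; rewrite mxE; apply/eqP.
  by move: (hn k); rewrite negbK.
have hml : (r (ord_pred w) <= m w)%N by move: (hm w); lia.
have [k0 hne] : exists k0 : 'I_(m w), expo (s (ord_pred w)) k0 != 0.
  case: (eqVneq (rcoef (s (ord_pred w)) (r (ord_pred w)).-1) 0) => [h0|hn0].
    have hil : (i < (r (ord_pred w)).-1)%N.
      case: ltnP => // hge.
      have ei : (i : nat) = (r (ord_pred w)).-1 by move: (ltn_ord i) hge; lia.
      by move: hi; rewrite -rcoef_ord ei h0 eqxx.
    exists (Ordinal (leq_trans (ltn_ord i) hml)).
    by rewrite /expo /= hil h0 addr0 rcoef_ord.
  have hk : ((r (ord_pred w)).-1 < m w)%N by move: (hr (ord_pred w)) hml; lia.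
  by exists (Ordinal hk); rewrite /expo /= ltnn.
have he : (0 < expo (s (ord_pred w)) k0 < p (ord_pred w))%N.
  apply/andP; split.
    rewrite lt0n; apply: contra hne => /eqP h; apply/eqP; apply: ord_inj; by rewrite h.
  have := Fp_cast (hp (ord_pred w)); move: (ltn_ord (expo (s (ord_pred w)) k0)); lia.
case: (hf_ord w) => _ [_ hj]; have [v hv] := hj _ he.
exists (fun z => dT (rowmat k0 v) z - fsh z (s (ord_pred z)) (dT (rowmat k0 v) z)), k0.
split; first exact: F3 H (dT (rowmat k0 v)).
rewrite dT_eq linearB /= row_fsh row_rowmat eqxx subr_eq0.
by apply/eqP => e; apply: hv; rewrite -e.
Qed.

Hypothesis hbij : forall z, bijective (fun u => f z u - u).

Lemma stepB z w (sg : Sz z) : ord_pred w = z -> L (tzero, dS sg) ->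
  forall M : Tz w, (forall k : 'I_(m w), row k M != 0 -> expo sg k = 1) -> L (dT M, szero).
Proof.
move=> e; subst z => Hs M hM.
case: (hbij w) => g gK Kg.
have g0 : g 0 = 0 by have := gK 0; rewrite f0 subr0.
pose X := \matrix_(k < m w) g (- row k M).
apply: Lext (F3 Hs (dT X)) _ _ => z' //=.
case: (eqVneq w z') => [<-|ne]; last by rewrite !dT_neq // fsh0 subr0.
rewrite !dT_eq dS_eq; apply/row_matrixP => k; rewrite linearB /= row_fsh rowK.
case: (eqVneq (row k M) 0) => [->|nz].
  by rewrite oppr0 g0 iterf0 subr0.
rewrite (hM k nz) val1 /=.
have h := Kg (- row k M); simpl in h.
by rewrite -opprB h opprK.
Qed.

Lemma stepC w (k0 : 'I_(m w)) : ((r w).-1 <= k0)%N -> (forall v, L (dT (rowmat k0 v), szero)) ->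
  exists sg : Sz w, L (tzero, dS sg) /\ forall k, expo sg k = 1.
Proof.
move=> hk H; have [v hv] := Vnz w; have [w' hw'] := bdual hv.
exists (bp w (rowmat k0 w') (rowmat k0 v)); split.
  by have := Lbp (rowmat k0 w') (H v); rewrite dT_eq.
have hY : row k0 (rowmat k0 v) = v by rewrite row_rowmat eqxx.
move=> k; rewrite /expo rcoef_bp_last (@sum_rowmat w k0 w' v _ hY) hw'.
case: ifP => // hlt; rewrite rcoef_bp_lt // mrow_rowmat; first by rewrite b01 add0r.
by apply/eqP => e; move: hlt hk; rewrite e; lia.
Qed.

Lemma G_step w : (forall M : Tz w, L (dT M, szero)) -> forall M : Tz (ordS w), L (dT M, szero).
Proof.
move=> G; have hk : ((r w).-1 < m w)%N by move: (hr w) (hm w) => ??; lia.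
have [sg [Hs hsg]] := @stepC w (Ordinal hk) (leqnn _) (fun v => G _).
move=> M; apply: (@stepB w (ordS w) sg (ordSK w) Hs) => k _; exact: hsg.
Qed.

Lemma G_all z0 : (forall M : Tz z0, L (dT M, szero)) -> forall w (M : Tz w), L (dT M, szero).
Proof.
move=> G0.
have Hk k : forall M : Tz (iter k (@ordS n) z0), L (dT M, szero).
  by elim: k => //= k IH; apply: G_step.
move=> w; have e : iter (n - z0 + w) (@ordS n) z0 = w.
  apply: ord_inj; rewrite iter_ordS addnA subnKC ?(ltnW (ltn_ord z0)) //.
  by rewrite modnDl modn_small.
rewrite -e; exact: Hk.
Qed.

Lemma LdS_add z (s1 s2 : Sz z) : L (tzero, dS s1) -> L (tzero, dS s2) -> L (tzero, dS (s1 + s2)).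
Proof.
move=> h1 h2; apply: Lext (Ladd h1 h2) _ _ => z' /=; first by rewrite /tzero addr0.
case: (eqVneq z z') => [<-|ne]; first by rewrite !dS_eq bp01 addr0.
by rewrite !dS_neq // bp01 !addr0.
Qed.

Lemma G_H w : (forall M : Tz w, L (dT M, szero)) -> forall sg : Sz w, L (tzero, dS sg).
Proof.
move=> G sg.
have Lb X Y : L (tzero, dS (bp w X Y)) by have := Lbp X (G Y); rewrite dT_eq.
have hk : ((r w).-1 < m w)%N by move: (hr w) (hm w) => ??; lia.
have [ub hub] := Vnz w; have [wb hwb] := bdual hub.
pose Y : Tz w := \matrix_(k < m w) ub.
pose X1 : Tz w := \matrix_(k < m w) ((if (k < (r w).-1)%N then rcoef sg k else 0) *: wb).
pose c := rcoef sg (r w).-1 - \sum_(j < m w) b w (row j X1) (row j Y).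
pose X2 : Tz w := rowmat (Ordinal hk) (c *: wb).
suff -> : sg = bp w X1 Y + bp w X2 Y by apply: LdS_add.
have hY : row (Ordinal hk) Y = ub by rewrite rowK.
apply/rowP => i; rewrite !mxE.
have him : (i < m w)%N by move: (ltn_ord i) (hm w) => ??; lia.
case: ifP => hi.
  rewrite /X2 mrow_rowmat /=; last by apply/eqP => e; move: hi; rewrite e ltnn.
  rewrite b01 addr0 /X1 /Y !(mrow_mx him) /= hi bZ1 hwb mulr1 rcoef_ord //.
rewrite (@sum_rowmat w (Ordinal hk) (c *: wb) ub Y hY) bZ1 hwb mulr1 /c addrC subrK.
have ei : (i : nat) = (r w).-1 by move: (ltn_ord i) hi => ??; lia.
by rewrite -ei rcoef_ord.
Qed.

Lemma all_L : (forall w (M : Tz w), L (dT M, szero)) -> forall x, L x.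
Proof.
move=> G [t s].
have Hs w sg := @G_H w (G w) sg.
have Y a : L (dT (t a), dS (s a)).
  apply: Lext (Ladd (G a (t a)) (Hs a (s a))) _ _ => z /=; first by rewrite /tzero addr0.
  by rewrite /szero add0r bp02 addr0.
have P (A : seq 'I_n) : uniq A -> L ((fun z => if z \in A then t z else 0),
                                     (fun z => if z \in A then s z else 0)).
  elim: A => [|a A IH] /=.
    by move=> _; apply: Lext L0 _ _ => z.
  case/andP => ha hu; apply: Lext (Ladd (IH hu) (Y a)) _ _ => z /=; rewrite in_cons;
  (case: (eqVneq z a) => [->|ne] /=; [rewrite (negbTE ha) | ]).
  - by rewrite dT_eq add0r.
  - by rewrite dT_neq 1?eq_sym // addr0.
  - by rewrite dT_eq dS_eq add0r bp01 addr0.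
  - by rewrite dT_neq 1?eq_sym // dS_neq 1?eq_sym // addr0 bp02 addr0.
apply: Lext (P (enum 'I_n) (enum_uniq _)) _ _ => z /=; by rewrite mem_enum.
Qed.

End Ideal.

Lemma ne1 (z0 : 'I_n) : (tzero, fun z => const_mx 1) <> zero :> B.
Proof.
move=> e.
have := congr1 (fun x : B => x.2 z0 0 (Ordinal (hr z0))) e; rewrite /= mxE.
by rewrite mxE; move/eqP; rewrite oner_eq0.
Qed.

Lemma nonzeroB (z0 : 'I_n) : exists x : B, x <> zero.
Proof. by exists (tzero, fun z => const_mx 1); apply: ne1 z0. Qed.

Lemma simple_of_bij (z0 : 'I_n) : (forall z, bijective (fun u => f z u - u)) ->
  simple_brace add zero mul zero.
Proof.
move=> hbij; split; first exact: nonzeroB z0.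
move=> L HL.
case: (classic (exists x, L x /\ x <> zero)) => [[[t s] [Hx nx]]|hno]; last first.
  left=> x; split => [Lx|->]; last exact: L0 L HL.
  by apply: NNPP => nx; apply: hno; exists x.
right.
have [z [j [t' [s' [Ht hj]]]]] : exists z (j : 'I_(m z)) t' s', L (t', s') /\ row j (t' z) != 0.
  case: (classic (exists z (j : 'I_(m z)), row j (t z) != 0)) => [[z [j hj]]|hno].
    by exists z, j, t, s.
  have t0 : forall z, t z = 0.
    move=> z; apply/row_matrixP => k; rewrite linear0; apply/eqP; apply: NNPP => h.
    by apply: hno; exists z, k; apply/negP.
  have [z hz] : exists z, s z != 0.
    apply: NNPP => h; apply: nx; apply: eqB => z /=; first exact: t0.
    by apply/eqP; apply: NNPP => h'; apply: h; exists z; apply/negP.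
  have hz' : s (ord_pred (ordS z)) != 0 by rewrite ordSK.
  have [t'' [j [Ht hj]]] := @stepZ L HL t s (ordS z) Hx hz'.
  by exists (ordS z), j, t'', szero.
have [sg [Hs h1 h2]] := @stepA L HL t' s' z j Ht hj.
set w := ordS z.
have hmw : (maxn (r w) (r z) <= m w)%N by have := hm w; rewrite ordSK.
have hexp k : (k != j :> nat) || ~~ (k < (r z).-1)%N -> expo sg k = 1.
  move=> hk; rewrite /expo h1; case: ifP => // hlt.
  move: hk; rewrite hlt orbF => hkj; rewrite h2 //.
  by move/negbTE: hkj => ->; rewrite add0r.
have [k0 [hk0a hk0b]] : exists k0 : 'I_(m w), ((r w).-1 <= k0)%N /\ expo sg k0 = 1.
  case: (boolP (((r w).-1 == j) && (j < (r z).-1)%N)) => [/andP [/eqP e1 e2]|hc].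
    have h : (r w < m w)%N by move: (hr w) hmw; lia.
    exists (Ordinal h); split => /=; first lia.
    by apply: hexp; apply/orP; left; apply/eqP => e3; move: e1 (hr w); lia.
  have h : ((r w).-1 < m w)%N by move: (hr w) hmw; lia.
  exists (Ordinal h); split => //=; apply: hexp.
  rewrite /=; case: (eqVneq (r w).-1 j) => [e|ne] //.
  by move: hc; rewrite e eqxx /=.
have hrow v : L (dT (rowmat k0 v), szero).
  apply: (@stepB L HL hbij z w sg (ordSK z) Hs) => k; rewrite row_rowmat.
  case: (eqVneq k k0) => [->|ne] /=; [by move=> _ | by rewrite eqxx].
have [sg' [Hs' hsg']] := @stepC L HL w k0 hk0a hrow.
have G1 : forall M : Tz (ordS w), L (dT M, szero).
  by move=> M; apply: (@stepB L HL hbij w (ordS w) sg' (ordSK w) Hs') => k _; exact: hsg'.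
exact: all_L L HL (G_all L HL hbij (ordS w) G1).
Qed.


Section Converse.
Variable z0 : 'I_n.
Local Notation Im y := (exists u, f z0 u - u = y).

Lemma Im0 : Im 0.
Proof. by exists 0; rewrite f0 subr0. Qed.
Lemma ImD a c : Im a -> Im c -> Im (a + c).
Proof. by move=> [u <-] [v <-]; exists (u + v); rewrite hf_add opprD addrACA. Qed.
Lemma ImN a : Im a -> Im (- a).
Proof. by move=> [u <-]; exists (- u); rewrite fN opprB opprK addrC. Qed.
Lemma ImF a : Im a -> Im (f z0 a).
Proof. by move=> [u <-]; exists (f z0 u); rewrite hf_add fN. Qed.
Lemma ImIter k a : Im a -> Im (iter k (f z0) a).
Proof. by move=> h; elim: k => //= k IH; apply: ImF. Qed.
Lemma ImIterInv k a : Im (iter k (f z0) a) -> Im a.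
Proof.
move=> /(ImIter (k * (p (ord_pred z0)).-1)); rewrite -iterD -mulnSr prednK ?prime_gt0 //.
by rewrite iter_ordP.
Qed.
Lemma ImIterSub k w : Im (iter k (f z0) w - w).
Proof.
elim: k => [|k IH] /=; first by rewrite subrr; exact: Im0.
have -> : f z0 (iter k (f z0) w) - w =
  (f z0 (iter k (f z0) w) - iter k (f z0) w) + (iter k (f z0) w - w) by rewrite addrA subrK.
by apply: ImD => //; exists (iter k (f z0) w).
Qed.

Definition LI (x : B) : Prop := forall j : 'I_(m z0), Im (row j (x.1 z0)).

Lemma expoD z (s s' : Sz z) k : expo (s + s') k = expo s k + expo s' k.
Proof. by rewrite /expo !rcoefD; case: ifP => _ //; ring. Qed.

Lemma rowDD (F : nzRingType) k c (A A' : 'M[F]_(k, c)) j : row j (A + A') = row j A + row j A'.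
Proof. by apply/rowP => i; rewrite !mxE. Qed.

Lemma mul1 (x y : B) z : (mul x y).1 z = x.1 z + fsh z (x.2 (ord_pred z)) (y.1 z).
Proof. by []. Qed.

Lemma LI_ideal : brace_ideal add zero mul zero LI.
Proof.
have LI0 : LI zero by move=> j; rewrite /= linear0; exact: Im0.
split; split.
- split; first exact: LI0.
  + by move=> x y hx hy j; rewrite /= linearD; apply: ImD; [exact: hx | exact: hy].
  + move=> x y hx /(congr1 (fun q : B => q.1 z0)) /= e j.
    have -> : y.1 z0 = - x.1 z0 by rewrite -[y.1 z0](addKr (x.1 z0)) e addr0.
    by rewrite linearN; apply: ImN; exact: hx.
- move=> bb x c hx /(congr1 (fun q : B => q.1 z0)) /= /addrI e j; rewrite e.
  by rewrite row_fsh; apply: ImIter; exact: hx.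
- exact: LI0.
- move=> x y hx hy j; rewrite mul1 rowDD row_fsh.
  by apply: ImD; [exact: hx | apply: ImIter; exact: hy].
- move=> x y hx /(congr1 (fun q : B => q.1 z0)) /= e j.
  have e2 : fsh z0 (x.2 (ord_pred z0)) (y.1 z0) = - x.1 z0.
    by rewrite -[fsh _ _ _](addKr (x.1 z0)) e addr0.
  apply: (@ImIterInv (expo (x.2 (ord_pred z0)) j)).
  by rewrite -row_fsh e2 linearN; apply: ImN; exact: hx.
- move=> bb c x /(congr1 (fun q : B => q.1 z0)) /= e hx j.
  rewrite !linearD /= !row_fsh expoD [(expo _ j + _)%R]addrC iterF_add.
  set W := iter (expo (bb.2 (ord_pred z0)) j) (f z0) (row j (c.1 z0)).
  have eW : row j (bb.1 z0) = - W.
    by rewrite /W -row_fsh -linearN; congr row; rewrite -[fsh _ _ _](addKr (bb.1 z0)) e addr0 opprK.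
  rewrite eW.
  have -> : - W + iter (expo (bb.2 (ord_pred z0)) j) (f z0) (row j (x.1 z0)) +
     iter (expo (x.2 (ord_pred z0)) j) (f z0) W =
     iter (expo (bb.2 (ord_pred z0)) j) (f z0) (row j (x.1 z0)) +
     (iter (expo (x.2 (ord_pred z0)) j) (f z0) W - W).
    by apply/rowP => i; rewrite !mxE; ring.
  by apply: ImD; [apply: ImIter; exact: hx | apply: ImIterSub].
Qed.

End Converse.

Lemma bij_of_simple : simple_brace add zero mul zero -> forall z, bijective (fun u => f z u - u).
Proof.
move=> [_ Hs] z0.
have hsurj : forall v, exists u, f z0 u - u == v.
  move=> v.
  have hm0 : (0 < m z0)%N by move: (hr z0) (hm z0); lia.
  case: (Hs _ (LI_ideal z0)) => [h|h].
    exfalso; apply: (ne1 z0); apply/(h _).1 => j /=; rewrite /tzero linear0; exact: Im0.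
  have := h (dT (\matrix_(k < m z0) v), szero) (Ordinal hm0).
  by rewrite /= dT_eq rowK => -[u hu]; exists u; apply/eqP.
pose g v := xchoose (hsurj v).
have gK : cancel g (fun u => f z0 u - u) by move=> v; exact: (eqP (xchooseP (hsurj v))).
have [g' gg' g'g] := injF_bij (can_inj gK).
exists g => // u.
have e : f z0 u - u = g' u.
  by have := gK (g' u); rewrite /= g'g.
by rewrite e g'g.
Qed.

End Proof3.

Theorem theorem3p3 (n : nat) (hn : (1 < n)%N)
  (p : 'I_n -> nat) (hp : forall z, prime (p z)) (hpinj : injective p)
  (r : 'I_n -> nat) (hr : forall z, (0 < r z)%N)
  (m : 'I_n -> nat) (hm : forall z, (maxn (r z) (r (ord_pred z)) <= m z)%N)
  (d : 'I_n -> nat)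
  (b : forall z, 'rV['F_(p z)]_(d z) -> 'rV['F_(p z)]_(d z) -> 'F_(p z))
  (hb_lin : forall z a u v w, b z (a *: u + v) w = a * b z u w + b z v w)
  (hb_sym : forall z u v, b z u v = b z v u)
  (hb_ns : forall z u, (forall v, b z u v = 0) -> u = 0)
  (f : forall z, 'rV['F_(p z)]_(d z) -> 'rV['F_(p z)]_(d z))
  (hf_add : forall z u v, f z (u + v) = f z u + f z v)
  (hf_bij : forall z, bijective (f z))
  (hf_orth : forall z u v, b z (f z u) (f z v) = b z u v)
  (hf_ord : forall z, map_order (f z) (p (ord_pred z))) :
  simple_brace (@asym_add n p r m d b) (asym_zero p r m d)
    (@asym_mul n p r m d f) (asym_zero p r m d)
  <-> (forall z, bijective (fun u => f z u - u)).
Proof.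
split.
  by apply: bij_of_simple.
by move=> H; apply: (@simple_of_bij n p r m d hp hr hm b hb_lin hb_sym hb_ns f hf_add hf_ord (Ordinal (ltnW hn))).
Qed.
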